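(* Fix $a_1,a_2,b_1,b_2>0$, $p_1,p_2\in(0,1)$, $q_1,q_2>1$, integers $n_1,n_2\ge1$ and exponents $\eta_{i,j}>0$ ($i=1,2$, $j\in\{1,\dots,n_i\}$), and suppose $\eta_{1,i}\eta_{2,j}\in[p_2,q_2]$ for all $i\in\{1,\dots,n_1\}$, $j\in\{1,\dots,n_2\}$ and $\frac{\max_j\eta_{2,j}}{\min_k\eta_{2,k}}\le\frac{q_2}{p_2}$. For $i=1,2$ let $\alpha_i(s)=a_is^{p_i}+b_is^{q_i}$. Then there exists $C>0$ such that for all coefficients $c_{i,j}>0$, setting $\sigma_i(s)=\sum_{j=1}^{n_i}c_{i,j}s^{\eta_{i,j}}$, $\gamma_i:=\alpha_i^{-1}\circ\sigma_i$ and $c_i:=\max_jc_{i,j}$: if $c_2\max_kc_1^{\eta_{2,k}}<C$, then there exist $\hat\gamma_1\in\mathcal{K}^{\mathcal{P}}$ and $\hat\gamma_2\in\mathcal{K}^{\mathcal{P}^{-1}}$ such that $\hat\gamma_i(s)>\gamma_i(s)$ for $i=1,2$ and $\hat\gamma_1\circ\hat\gamma_2(s)<s$ for all $s>0$.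
   Context: $\mathcal{K}_\infty$: continuous strictly increasing unbounded $\alpha:\mathbb{R}_{\ge0}\to\mathbb{R}_{\ge0}$ with $\alpha(0)=0$. $\mathcal{K}^{\mathcal{P}}$: the $\alpha\in\mathcal{K}_\infty$ of the form $\sum_{i=1}^nc_is^{p_i}$ with real $c_i\ne0$, $p_i>0$, and $\alpha'(s)>0$ for $s>0$. $\mathcal{K}^{\mathcal{P}^{-1}}$: the $\alpha\in\mathcal{K}_\infty$ with $\alpha^{-1}\in\mathcal{K}^{\mathcal{P}}$. *)

(* Defs.v *)
From HB Require Import structures.
From mathcomp Require Import all_boot all_order all_algebra.
From mathcomp Require Import all_classical all_reals all_analysis.
Set Implicit Arguments. Unset Strict Implicit. Unset Printing Implicit Defensive.
Import Order.TTheory GRing.Theory Num.Theory.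
Import numFieldNormedType.Exports.
Local Open Scope classical_set_scope.
Local Open Scope ring_scope.

Section Defs.
Variable R : realType.

Definition Kinf (alpha : R -> R) : Prop :=
  [/\ alpha 0 = 0,
      {within [set x : R | 0 <= x], continuous alpha},
      (forall x y, 0 <= x -> x < y -> alpha x < alpha y)
    & (forall M : R, exists s, 0 <= s /\ M < alpha s)].

Definition KP (alpha : R -> R) : Prop :=
  Kinf alpha /\
  (exists (n : nat) (c p : 'I_n -> R),
      (forall i, c i != 0 /\ 0 < p i) /\
      (forall s, 0 <= s -> alpha s = \sum_(i < n) c i * s `^ p i)) /\
  (forall s, 0 < s -> derivable alpha s 1 /\ 0 < derive1 alpha s).

Definition KPinv (alpha : R -> R) : Prop :=
  Kinf alpha /\
  exists beta : R -> R, KP beta /\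
    (forall s, 0 <= s -> beta (alpha s) = s) /\
    (forall s, 0 <= s -> alpha (beta s) = s).

Definition Kinverse (alpha : R -> R) (y : R) : R :=
  xget 0 [set t : R | 0 <= t /\ alpha t = y].

Definition alpha_pq (a b p q : R) (s : R) : R := a * s `^ p + b * s `^ q.

Definition sigma_sum (n : nat) (c eta : 'I_n -> R) (s : R) : R :=
  \sum_(j < n) c j * s `^ eta j.

(* maximum of finitely many positive reals (0 for the empty family) *)
Definition fmax (n : nat) (f : 'I_n -> R) : R := \big[Num.max/0]_(i < n) f i.
Definition fmin (n : nat) (f : 'I_n -> R) : R := \big[Num.min/fmax f]_(i < n) f i.

End Defs.

(* Main.v *)
Require Import Defs.
From HB Require Import structures.
From mathcomp Require Import all_boot all_order all_algebra.
From mathcomp Require Import all_classical all_reals all_analysis.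
From mathcomp Require Import ring lra.
Import Order.TTheory GRing.Theory Num.Theory.
Import numFieldNormedType.Exports.
Import Num.Def.
Local Open Scope classical_set_scope.
Local Open Scope ring_scope.

Lemma Kinv_spec (R : realType) (alpha : R -> R) y :
  (0 <= Kinverse alpha y /\ alpha (Kinverse alpha y) = y) \/ Kinverse alpha y = 0.
Proof.
case: (pselect (exists t, 0 <= t /\ alpha t = y)) => [ex|nex].
  by left; exact: (xgetPex 0 ex).
by right; apply: xgetPN => t Pt; apply: nex; exists t.
Qed.

Lemma le_fmax (R : realType) n (f : 'I_n -> R) j : f j <= fmax f.
Proof. exact: le_bigmax. Qed.

Lemma alpha_lin (R : realType) (a b p q t : R) : 0 < a -> 0 < b -> 0 < p <= 1 -> 1 <= q ->
  0 <= t -> minr a b * t <= alpha_pq a b p q t.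
Proof.
move=> a0 b0 /andP[p0 p1] q1 t0; rewrite /alpha_pq.
have ha := powR_ge0 t p; have hb := powR_ge0 t q.
have [t1|t1] := leP t 1.
  have : t <= t `^ p.
    have [->|tp] := eqVneq t 0; first by rewrite powR0 ?gt_eqF.
    by apply: ger1_powR => //; rewrite t1 andbT lt_neqAle eq_sym tp t0.
  have : minr a b <= a by rewrite ge_min lexx.
  move=> h1 h2.
  have hm : 0 <= minr a b by rewrite le_min (ltW a0) (ltW b0).
  have : minr a b * t <= a * t `^ p by nra.
  have : 0 <= b * t `^ q by rewrite mulr_ge0 // ltW.
  lra.
have : t <= t `^ q by apply: le1r_powR => //; exact: ltW.
have : minr a b <= b by rewrite ge_min lexx orbT.
move=> h1 h2.
have hm : 0 <= minr a b by rewrite le_min (ltW a0) (ltW b0).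
have : minr a b * t <= b * t `^ q by nra.
have : 0 <= a * t `^ p by rewrite mulr_ge0 // ltW.
lra.
Qed.

Lemma alpha_X (R : realType) (a b p q t : R) : 0 < a -> 0 < b ->
  minr a b * (t `^ p + t `^ q) <= alpha_pq a b p q t.
Proof.
move=> a0 b0; rewrite /alpha_pq mulrDr.
have ha := powR_ge0 t p; have hb := powR_ge0 t q.
apply: lerD; apply: ler_wpM2r => //; rewrite ge_min lexx ?orbT //.
Qed.

Lemma pow_between (R : realType) (t p q r : R) : 0 <= t -> 0 < p -> p <= r <= q ->
  t `^ r <= t `^ p + t `^ q.
Proof.
move=> t0 p0 /andP[pr rq].
have ha := powR_ge0 t p; have hb := powR_ge0 t q.
have [->|tn0] := eqVneq t 0.
  rewrite (powR0 (x:=r)) ?addr_ge0 // gt_eqF //; exact: lt_le_trans pr.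
have [t1|t1] := leP t 1.
  have : t `^ r <= t `^ p.
    by apply: ger_powR => //; rewrite t1 andbT lt_neqAle eq_sym tn0 t0.
  lra.
have : t `^ r <= t `^ q by apply: ler_powR => //; exact: ltW.
lra.
Qed.

Lemma cont0 (R : realType) (f : R -> R) : (forall x, 0 < x -> {for x, continuous f}) ->
  f x @[x --> 0^'+] --> f 0 -> {within [set x : R | 0 <= x], continuous f}.
Proof.
move=> Hp H0; apply/subspace_continuousP => x /= x0.
have [xp|x0'] := ltP 0 x.
  apply: cvg_trans (Hp x xp); apply: cvg_fmap2; exact: cvg_within.
have -> : x = 0 by apply/eqP; rewrite eq_le x0' x0.
apply/cvgrPdist_lt => eps eps0.
move/cvgrPdist_lt: H0 => /(_ eps eps0).
rewrite !near_withinE => H; apply: filterS H => y Hy /= y0.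
have [yp|y0'] := ltP 0 y; first exact: Hy.
have -> : y = 0 by apply/eqP; rewrite eq_le y0' y0.
by rewrite subrr normr0.
Qed.

Section PS.
Variable R : realType.
Variables (n : nat) (d e : 'I_n -> R).
Hypothesis n1 : (1 <= n)%N.
Hypothesis d0 : forall j, 0 < d j.
Hypothesis e0 : forall j, 0 < e j.

Definition psum (s : R) : R := \sum_(j < n) d j * s `^ e j.

Let j0 : 'I_n := Ordinal n1.

Lemma psum0 : psum 0 = 0.
Proof. by apply: big1 => j _; rewrite powR0 ?mulr0 // gt_eqF. Qed.

Lemma psum_ge0 s : 0 <= psum s.
Proof. by apply: sumr_ge0 => j _; rewrite mulr_ge0 ?powR_ge0 // ltW. Qed.

Lemma psum_ge_term s j : d j * s `^ e j <= psum s.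
Proof.
rewrite /psum (bigD1 j) //= lerDl; apply: sumr_ge0 => i _.
by rewrite mulr_ge0 ?powR_ge0 // ltW.
Qed.

Lemma psum_gt0 s : 0 < s -> 0 < psum s.
Proof.
move=> s0; apply: lt_le_trans (psum_ge_term s j0).
by rewrite mulr_gt0 ?powR_gt0.
Qed.

Lemma psum_lt {x y} : 0 <= x -> x < y -> psum x < psum y.
Proof.
move=> x0 xy; apply: ltr_sum.
  by apply/hasP; exists j0; rewrite ?mem_index_enum.
move=> j _; rewrite ltr_pM2l //; apply: gt0_ltr_powR => //;
  rewrite nnegrE //; exact: le_trans (ltW xy).
Qed.

Lemma psum_le {x y} : 0 <= x -> x <= y -> psum x <= psum y.
Proof.
move=> x0; rewrite le_eqVlt => /orP[/eqP -> //|xy].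
exact/ltW/psum_lt.
Qed.

Lemma psum_unbounded (M : R) : exists s, 0 <= s /\ M < psum s.
Proof.
set K := (`|M| + 1) / d j0.
have K0 : 0 < K by rewrite divr_gt0 // ltr_pwDr // normr_ge0.
exists (K `^ (e j0)^-1); split; first exact: powR_ge0.
apply: lt_le_trans (psum_ge_term _ j0).
rewrite -powRrM mulVf ?gt_eqF // powRr1 ?ltW //.
rewrite /K mulrC divfK ?gt_eqF //.
by apply: le_lt_trans (ler_norm M) _; rewrite ltrDl.
Qed.

Lemma psum_is_derive (x : R) : 0 < x ->
  is_derive x 1 psum (\sum_(j < n) d j * (e j * x `^ (e j - 1))).
Proof.
move=> x0.
have -> : psum = \sum_(j < n) (fun s => d j * s `^ e j).
  by rewrite fct_sumE.
apply: is_derive_sum => j.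
have -> : (fun s => d j * s `^ e j) = d j \*: (@powR R ^~ (e j)).
  by apply/funext => s.
have H := is_deriveZ (d j) (@is_derive1_powR R (e j) x x0). exact H.
Qed.

Lemma psum_cont_pos (x : R) : 0 < x -> {for x, continuous psum}.
Proof.
move=> x0; have H := psum_is_derive x x0.
apply/differentiable_continuous; rewrite -derivable1_diffP.
exact: ex_derive.
Qed.

Lemma psum_derive (x : R) : 0 < x -> derivable psum x 1 /\ 0 < derive1 psum x.
Proof.
move=> x0; have H := psum_is_derive x x0; split; first exact: ex_derive.
rewrite derive1E derive_val.
apply: lt_le_trans (_ : d j0 * (e j0 * x `^ (e j0 - 1)) <= _).
  by rewrite !mulr_gt0 ?powR_gt0.
rewrite (bigD1 j0) //= lerDl; apply: sumr_ge0 => i _.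
by rewrite mulr_ge0 ?mulr_ge0 ?powR_ge0 // ltW.
Qed.

Lemma psum_cvg0 : psum x @[x --> 0^'+] --> 0.
Proof.
have H : psum x @[x --> 0^'+] --> \sum_(j < n) d j * (0:R).
  apply: cvg_big; first exact: add_continuous.
  move=> j _; apply: cvgMl_tmp; exact: (powR_cvg0 (e0 j)).
by move: H; rewrite big1 // => j _; rewrite mulr0.
Qed.


Lemma psum_Kinf : Kinf psum.
Proof.
split.
- exact: psum0.
- apply: cont0; first exact: psum_cont_pos.
  rewrite psum0; exact: psum_cvg0.
- by move=> x y; exact: psum_lt.
- exact: psum_unbounded.
Qed.

Lemma psum_KP : KP psum.
Proof.
split; first exact: psum_Kinf.
split; last exact: psum_derive.
exists n, d, e; split => // j; split; [exact/lt0r_neq0 | exact: e0].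
Qed.

Lemma psum_surj {y} : 0 <= y -> exists t, 0 <= t /\ psum t = y.
Proof.
move=> y0; have [T [T0 HT]] := psum_unbounded y.
have cT : {within `[0, T], continuous psum}.
  have [_ hc _ _] := psum_Kinf.
  apply: continuous_subspaceW hc.
  by move=> z /=; rewrite in_itv /= => /andP[].
have [|c cT' fc] := @IVT R psum 0 T y T0 cT.
  rewrite psum0 (min_idPl (psum_ge0 T)) (max_idPr (psum_ge0 T)) y0 /=.
  exact: ltW.
by exists c; split => //; move: cT'; rewrite in_itv /= => /andP[].
Qed.

Let g := Kinverse psum.

Lemma g_spec {y} : 0 <= y -> 0 <= g y /\ psum (g y) = y.
Proof. by move=> y0; rewrite /g /Kinverse; exact: (xgetPex 0 (psum_surj y0)). Qed.

Lemma g_psum {s} : 0 <= s -> g (psum s) = s.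
Proof.
move=> s0; have [t0 ht] := g_spec (psum_ge0 s).
case: (ltgtP (g (psum s)) s) => // H.
- by have := psum_lt t0 H; rewrite ht ltxx.
- by have := psum_lt s0 H; rewrite ht ltxx.
Qed.

Lemma g_lt {x y} : 0 <= x -> x < y -> g x < g y.
Proof.
move=> x0 xy; have y0 : 0 <= y by apply: le_trans (ltW xy).
have [gx0 hx] := g_spec x0; have [gy0 hy] := g_spec y0.
rewrite ltNge; apply/negP => H.
by have := psum_le gy0 H; rewrite hx hy leNgt xy.
Qed.

Lemma g0 : g 0 = 0.
Proof. by rewrite -{1}psum0 g_psum. Qed.

Lemma g_KPinv : KPinv g.
Proof.
split; last first.
  exists psum; split; first exact: psum_KP.
  split=> s s0; [exact: (g_spec s0).2 | exact: g_psum].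
split.
- exact: g0.
- apply: cont0.
    move=> x x0.
    have gx0 : 0 < g x by rewrite -g0; apply: g_lt.
    have := @near_can_continuous R psum g (g x).
    rewrite (g_spec (ltW x0)).2 => H.
    apply: (nbhs_singleton (H _ _)).
      near=> y; apply: g_psum; apply: ltW; near: y; exact: lt_nbhsr.
    near=> y; apply: psum_cont_pos; near: y; exact: lt_nbhsr.
  rewrite g0; apply/cvgrPdist_lt => eps eps0.
  have pe0 : 0 < psum eps by apply: psum_gt0.
  rewrite near_withinE; have := lt_nbhsl_lt pe0; apply: filterS => y Hy y0.
  have [gy0 hy] := g_spec (ltW y0).
  rewrite sub0r normrN ger0_norm //.
  rewrite ltNge; apply/negP => H.
  have := psum_le (ltW eps0) H; rewrite hy leNgt.
  by rewrite (Hy (ltW y0)).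
- by move=> x y; exact: g_lt.
- move=> M; exists (psum (`|M| + 1)); split; first exact: psum_ge0.
  rewrite g_psum; last by rewrite addr_ge0.
  by apply: le_lt_trans (ler_norm M) _; rewrite ltrDl.
Unshelve. all: by end_near.
Qed.

End PS.

Theorem lemma10 (R : realType) (a1 a2 b1 b2 p1 p2 q1 q2 : R) (n1 n2 : nat)
    (eta1 : 'I_n1 -> R) (eta2 : 'I_n2 -> R) :
  0 < a1 -> 0 < a2 -> 0 < b1 -> 0 < b2 ->
  0 < p1 < 1 -> 0 < p2 < 1 -> 1 < q1 -> 1 < q2 ->
  (1 <= n1)%N -> (1 <= n2)%N ->
  (forall j, 0 < eta1 j) -> (forall j, 0 < eta2 j) ->
  (forall i j, p2 <= eta1 i * eta2 j <= q2) ->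
  fmax eta2 / fmin eta2 <= q2 / p2 ->
  exists C : R, 0 < C /\
    forall (c1 : 'I_n1 -> R) (c2 : 'I_n2 -> R),
      (forall j, 0 < c1 j) -> (forall j, 0 < c2 j) ->
      let gamma1 := fun s => Kinverse (alpha_pq a1 b1 p1 q1) (sigma_sum c1 eta1 s) in
      let gamma2 := fun s => Kinverse (alpha_pq a2 b2 p2 q2) (sigma_sum c2 eta2 s) in
      fmax c2 * fmax (fun k => fmax c1 `^ eta2 k) < C ->
      exists gh1 gh2 : R -> R, KP gh1 /\ KPinv gh2 /\
        forall s, 0 < s ->
          [/\ gh1 s > gamma1 s, gh2 s > gamma2 s & gh1 (gh2 s) < s].
Proof.
move=> a10 a20 b10 b20 /andP[p10 p11] /andP[p20 p21] q11 q21 n10 n20 e10 e20 hee _.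
set m1 := minr a1 b1; set m2 := minr a2 b2.
have m10 : 0 < m1 by rewrite lt_min a10 b10.
have m20 : 0 < m2 by rewrite lt_min a20 b20.
set B := 4 * n1%:R / m1.
have B0 : 0 < B by rewrite divr_gt0 // mulr_gt0 // ltr0n.
set P := psum R n2 (fun=> 1) eta2 B.
have P0 : 0 < P by apply: psum_gt0.
exists (m2 / P); split; first by rewrite divr_gt0.
move=> c1 c2 hc1 hc2 gamma1 gamma2 Hsmall.
set M1 := fmax c1; set M2 := fmax c2.
set F := fmax (fun k => M1 `^ eta2 k).
have j1 : 'I_n1 := Ordinal n10.
have k2 : 'I_n2 := Ordinal n20.
have M10 : 0 < M1 by apply: lt_le_trans (hc1 j1) (@le_fmax R n1 c1 j1).
have M20 : 0 < M2 by apply: lt_le_trans (hc2 k2) (@le_fmax R n2 c2 k2).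
have F0 : 0 <= F by apply: le_trans (@le_fmax R n2 _ k2); exact: powR_ge0.
set A := B * M1 / n1%:R.
have n1R : 0 < n1%:R :> R by rewrite ltr0n.
have A0 : 0 < A by rewrite divr_gt0 // mulr_gt0.
set d1 := fun j => 2 * c1 j / m1.
have d10 : forall j, 0 < d1 j by move=> j; rewrite divr_gt0 // mulr_gt0.
have d1A : forall j, d1 j < A.
  move=> j; rewrite /d1 /A /B.
  have : c1 j <= M1 by apply: le_fmax.
  have -> : 4 * n1%:R / m1 * M1 / n1%:R = 4 * M1 / m1 by field; rewrite !gt_eqF.
  move=> h; rewrite ltr_pM2r ?invr_gt0 //; have := hc1 j; lra.
set gh1 := psum R n1 d1 eta1.
set beta := psum R n1 (fun=> A) eta1.
exists gh1, (Kinverse beta); split; first exact: (psum_KP R n1 d1 eta1 n10 d10 e10).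
split; first exact: (g_KPinv R n1 (fun=> A) eta1 n10 (fun=> A0) e10).
move=> s s0.
have gbeta := fun y => @g_spec R n1 (fun=> A) eta1 n10 (fun=> A0) e10 y.
have gh2pos : 0 < Kinverse beta s.
  by rewrite -(g0 R n1 (fun=> A) eta1 n10 (fun=> A0) e10); apply: (g_lt R n1 (fun=> A) eta1 n10 (fun=> A0) e10).
split.
-
  rewrite /gamma1; case: (Kinv_spec R (alpha_pq a1 b1 p1 q1) (sigma_sum c1 eta1 s)) => [[t0 ht]|->]; last by apply: psum_gt0.
  set t := Kinverse _ _ in t0 ht *.
  have hl := alpha_lin R a1 b1 p1 q1 t a10 b10.
  rewrite ht in hl.
  have Hg : gh1 s = 2 / m1 * sigma_sum c1 eta1 s.
    rewrite /gh1 /psum /sigma_sum mulr_sumr; apply: eq_bigr => j _.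
    rewrite /d1; field; by rewrite gt_eqF.
  have sp : 0 < sigma_sum c1 eta1 s := psum_gt0 R n1 c1 eta1 n10 hc1 s s0.
  rewrite Hg.
  have : m1 * t <= sigma_sum c1 eta1 s by apply: hl => //; [rewrite p10 ltW | exact: ltW].
  move=> h.
  rewrite -(ltr_pM2l m10) mulrA mulrCA divff ?gt_eqF // mulr1.
  lra.
-
  rewrite /gamma2; case: (Kinv_spec R (alpha_pq a2 b2 p2 q2) (sigma_sum c2 eta2 s)) => [[t0 ht]|->]; last by [].
  set t := Kinverse _ _ in t0 ht *.
  suff bt : beta t < s.
    rewrite ltNge; apply/negP => H.
    have := psum_le R n1 (fun=> A) eta1 n10 (fun=> A0) e10 (ltW gh2pos) H.
    by rewrite (gbeta s (ltW s0)).2 leNgt bt.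
  have key : forall j, B * M1 * t `^ eta1 j < s.
    move=> j; rewrite ltNge; apply/negP => H.
    have tpos : 0 < t.
      rewrite lt_neqAle t0 andbT eq_sym; apply/negP => /eqP tz.
      by move: H; rewrite tz powR0 ?gt_eqF // mulr0 leNgt s0.
    set X := t `^ p2 + t `^ q2.
    have X0 : 0 < X by rewrite /X ltr_pwDr ?powR_gt0 ?powR_ge0.
    have hX : m2 * X <= alpha_pq a2 b2 p2 q2 t := alpha_X R a2 b2 p2 q2 t a20 b20.
    have hsig : sigma_sum c2 eta2 s <= M2 * F * X * P.
      rewrite /P /psum /sigma_sum mulr_sumr; apply: ler_sum => k _.
      have h1 : s `^ eta2 k <= (B * M1 * t `^ eta1 j) `^ eta2 k.
        by apply: ge0_ler_powR => //; [exact: ltW | rewrite nnegrE ltW | rewrite nnegrE; exact: le_trans (ltW s0) H].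
      have h2 : (B * M1 * t `^ eta1 j) `^ eta2 k = B `^ eta2 k * M1 `^ eta2 k * t `^ (eta1 j * eta2 k).
        rewrite (@powRM R (B * M1) (t `^ eta1 j) (eta2 k) (mulr_ge0 (ltW B0) (ltW M10)) (powR_ge0 _ _)).
        by rewrite (@powRM R B M1 (eta2 k) (ltW B0) (ltW M10)) -powRrM.
      have h3 : M1 `^ eta2 k <= F := @le_fmax R n2 (fun k => M1 `^ eta2 k) k.
      have h4 : t `^ (eta1 j * eta2 k) <= X := pow_between R t p2 q2 _ t0 p20 (hee j k).
      have h5 : c2 k <= M2 := @le_fmax R n2 c2 k.
      have hB := powR_ge0 B (eta2 k); have hM := powR_ge0 M1 (eta2 k).
      have ht' := powR_ge0 t (eta1 j * eta2 k); have hs := powR_ge0 s (eta2 k).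
      have -> : M2 * F * X * (1 * B `^ eta2 k) = M2 * (B `^ eta2 k * F * X) by ring.
      apply: ler_pM => //; first exact: ltW.
      apply: le_trans h1 _; rewrite h2; apply: ler_pM => //; first by rewrite mulr_ge0.
      by apply: ler_pM.
    have hMF : M2 * F * P < m2 by rewrite -ltr_pdivlMr.
    have : M2 * F * P * X < m2 * X by rewrite ltr_pM2r.
    have -> : M2 * F * P * X = M2 * F * X * P by ring.
    lra.
  rewrite /beta /psum.
  apply: (@lt_le_trans _ _ (\sum_(j < n1) (s / n1%:R))); last first.
    by rewrite sumr_const card_ord -[_ *+ n1]mulr_natr divfK // gt_eqF.
  apply: ltr_sum; first by apply/hasP; exists j1; rewrite ?mem_index_enum.
  move=> j _; rewrite /A mulrAC ltr_pM2r ?invr_gt0 //; exact: key.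
-
  apply: (@lt_le_trans _ _ (beta (Kinverse beta s))); last by rewrite /beta (gbeta s (ltW s0)).2.
  apply: ltr_sum; first by apply/hasP; exists j1; rewrite ?mem_index_enum.
  move=> j _; rewrite ltr_pM2r ?powR_gt0 //.
Qed.
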